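(* Let $A\in\mathbb{R}^{n\times n}$ be monotone and let $A=P_1-R_1+S_1=P_2-R_2+S_2$ be two double weak regular splittings of $A$. Suppose $A=P_3-R_3+S_3$ is a double regular splitting with $1\notin\sigma(S_3P_i^{-1})$ and $\widehat{A}_i^{-1}\geq 0$ for $i=1,2$, where $\widehat{A}_i=(I-S_3P_i^{-1})A$. Let $\widehat{P}_i=P_3$ and $\widehat{R}_i=R_3-S_3P_i^{-1}R_i$. If $\widehat{P}_1^{-1}\widehat{A}_1\geq\widehat{P}_2^{-1}\widehat{A}_2$ and $\widehat{P}_1^{-1}\widehat{R}_1\geq\widehat{P}_2^{-1}\widehat{R}_2$, then $\rho(W_{13})\leq\rho(W_{23})<1$, where for $i=1,2$ $$W_{i3}=\begin{pmatrix} P_3^{-1}R_3-P_3^{-1}S_3P_i^{-1}R_i & P_3^{-1}S_3P_i^{-1}S_i\\ I & 0\end{pmatrix}.$$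
   Context: Inequalities are entrywise; $\rho$ is the spectral radius, $\sigma$ the spectrum. $A$ is monotone if $A$ is nonsingular and $A^{-1}\geq 0$. A double splitting $A=P-R+S$ with $P$ nonsingular is a double regular splitting if $P^{-1}\geq0$, $R\geq0$, $S\leq0$, and a double weak regular splitting if $P^{-1}\geq 0$, $P^{-1}R\geq0$, $P^{-1}S\leq0$. *)

(* Defs.v *)
From HB Require Import structures.
From mathcomp Require Import all_boot all_order all_algebra.
From mathcomp Require Import classical_sets reals.
From mathcomp.real_closed Require Import complex.
Set Implicit Arguments. Unset Strict Implicit. Unset Printing Implicit Defensive.
Import Order.TTheory GRing.Theory Num.Theory.
Local Open Scope ring_scope.
Local Open Scope classical_set_scope.

Definition mx_ge0 (R : realType) m n (A : 'M[R]_(m, n)) : Prop :=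
  forall i j, 0 <= A i j.
Definition mx_le0 (R : realType) m n (A : 'M[R]_(m, n)) : Prop :=
  forall i j, A i j <= 0.
Definition mx_ge (R : realType) m n (A B : 'M[R]_(m, n)) : Prop :=
  forall i j, B i j <= A i j.

Definition monotone (R : realType) n (A : 'M[R]_n) : Prop :=
  A \in unitmx /\ mx_ge0 (invmx A).

Definition spectrum (R : realType) n (A : 'M[R]_n) : set R[i] :=
  [set l : R[i] | eigenvalue (map_mx (fun x : R => (x%:C)%C) A) l].

Definition spectral_radius (R : realType) n (A : 'M[R]_n) : R :=
  sup [set ComplexField.Normc.normc l | l in spectrum A].

Definition double_weak_regular_splitting (R : realType) n
    (A P Rm S : 'M[R]_n) : Prop :=
  [/\ A = P - Rm + S, P \in unitmx, mx_ge0 (invmx P),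
      mx_ge0 (invmx P *m Rm) & mx_le0 (invmx P *m S)].

Definition double_regular_splitting (R : realType) n
    (A P Rm S : 'M[R]_n) : Prop :=
  [/\ A = P - Rm + S, P \in unitmx, mx_ge0 (invmx P),
      mx_ge0 Rm & mx_le0 S].

Definition Ahat (R : realType) n (A Pi S3 : 'M[R]_n) : 'M[R]_n :=
  (1%:M - S3 *m invmx Pi) *m A.

Definition Rhat (R : realType) n (Pi Ri R3 S3 : 'M[R]_n) : 'M[R]_n :=
  R3 - S3 *m invmx Pi *m Ri.

Definition W (R : realType) n (Pi Ri Si P3 R3 S3 : 'M[R]_n) : 'M[R]_(n + n) :=
  block_mx (invmx P3 *m R3 - invmx P3 *m S3 *m invmx Pi *m Ri)
           (invmx P3 *m S3 *m invmx Pi *m Si)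
           1%:M 0.

(* Main.v *)
Require Import Defs.
From HB Require Import structures.
From mathcomp Require Import all_boot all_order all_algebra.
From mathcomp Require Import classical_sets reals boolp.
From mathcomp.real_closed Require Import complex.
From mathcomp Require Import ring lra.
Set Implicit Arguments. Unset Strict Implicit. Unset Printing Implicit Defensive.
Import Order.TTheory GRing.Theory Num.Theory.
Local Open Scope ring_scope.
Local Open Scope classical_set_scope.

Section Helpers.
Variable R : realType.

Lemma Zcrit k (Z : 'M[R]_k) (x : 'rV[R]_k) :
  (forall i j, i != j -> Z i j <= 0) -> (forall i, 0 < x 0 i) ->
  (forall j, 0 < (x *m Z) 0 j) ->
  forall w : 'rV[R]_k, (forall j, 0 <= (w *m Z) 0 j) -> forall i, 0 <= w 0 i.
Proof.
move=> Zoff xpos xZpos w wZ i0.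
rewrite leNgt; apply/negP => wi0.
pose j := [arg min_(i < i0) (w 0 i / x 0 i)]%O.
have [c cj cmin] : exists2 c, c = w 0 j / x 0 j & forall i, c <= w 0 i / x 0 i.
  rewrite /j; case: Order.TotalTheory.arg_minP => // j' _ H.
  by exists (w 0 j' / x 0 j') => // i; apply: H.
have cneg : c < 0.
  apply: le_lt_trans (cmin i0) _.
  by rewrite pmulr_llt0 ?invr_gt0.
have cle : forall i, c * x 0 i <= w 0 i.
  by move=> i; rewrite -ler_pdivlMr // cmin.
have : (w *m Z) 0 j <= c * (x *m Z) 0 j.
  rewrite !mxE mulr_sumr; apply: ler_sum => i _.
  have [->|ij] := eqVneq i j.
    by rewrite cj mulrA divfK // gt_eqF.
  by rewrite mulrA ler_wnM2r // Zoff.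
move=> H; have := le_trans (wZ j) H.
rewrite pmulr_lge0 ?xZpos // leNgt cneg. by [].
Qed.


Lemma Zunit k (Z : 'M[R]_k) (x : 'rV[R]_k) :
  (forall i j, i != j -> Z i j <= 0) -> (forall i, 0 < x 0 i) ->
  (forall j, 0 < (x *m Z) 0 j) -> Z \in unitmx.
Proof.
move=> Zoff xpos xZpos.
have ker0 : forall w : 'rV[R]_k, w *m Z = 0 -> w = 0.
  move=> w wZ0; apply/matrixP => i j; rewrite ord1 mxE.
  apply/eqP; rewrite eq_le; apply/andP; split.
    have := @Zcrit _ _ _ Zoff xpos xZpos (- w).
    rewrite mulNmx wZ0 oppr0 => H.
    have H0 : forall j, 0 <= (0 : 'rV[R]_k) 0 j by move=> ?; rewrite mxE.
    by have := H H0 j; rewrite mxE oppr_ge0.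
  apply: (Zcrit Zoff xpos xZpos) => j'; by rewrite wZ0 mxE.
rewrite -row_free_unit -kermx_eq0; apply/eqP/row_matrixP => i.
rewrite row0; apply: ker0; by rewrite -row_mul mulmx_ker row0.
Qed.


Definition Zmx k (M : 'M[R]_k) (t : R) : 'M[R]_k := t%:M - M.

Lemma lowerPF k (M : 'M[R]_k) (y : 'rV[R]_k) (mu : R) :
  (forall i j, 0 <= M i j) -> (forall j, 0 <= y 0 j) -> y != 0 ->
  (forall j, mu * y 0 j <= (y *m M) 0 j) ->
  exists2 t, mu <= t & ~~ (t%:M - M \in unitmx).
Proof.
move=> M0 y0 yn0 yM.
pose Z := Zmx M.
have ZE : forall (w : 'rV[R]_k) t j, (w *m Z t) 0 j = t * w 0 j - (w *m M) 0 j.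
  by move=> w t j; rewrite /Z /Zmx mulmxBr mul_mx_scalar !mxE.
have Zoff : forall t i j, i != j -> Z t i j <= 0.
  by move=> t i j ij; rewrite /Z /Zmx !mxE (negbTE ij) mulr0n sub0r oppr_le0.
have wM0 : forall w : 'rV[R]_k, (forall i, 0 <= w 0 i) -> forall j, 0 <= (w *m M) 0 j.
  by move=> w w0 j; rewrite mxE; apply: sumr_ge0 => i _; apply: mulr_ge0.
pose good t := exists x : 'rV[R]_k, (forall i, 0 < x 0 i) /\ (forall j, 0 < (x *m Z t) 0 j).
pose G := [set t : R | good t].
have goodgt : forall t, good t -> mu < t.
  move=> t [x [xp xZ]]; rewrite ltNge; apply/negP => tle.
  have H : forall j, 0 <= ((- y) *m Z t) 0 j.
    move=> j; rewrite mulNmx mxE ZE opprB subr_ge0.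
    by apply: le_trans (yM j); rewrite ler_wpM2r.
  have := Zcrit (Zoff t) xp xZ H => Hy.
  move/negP: yn0; apply; apply/eqP/matrixP => i j; rewrite ord1 mxE.
  by apply/eqP; rewrite eq_le y0 andbT -oppr_ge0; have := Hy j; rewrite mxE.
pose t0 := 1 + \sum_i \sum_j M i j.
have Gt0 : G t0.
  exists (const_mx 1); split=> [i|j]; first by rewrite mxE ltr01.
  rewrite ZE mxE mulr1 subr_gt0.
  apply: le_lt_trans (_ : \sum_i \sum_j M i j < t0); last by rewrite ltrDr ltr01.
  rewrite mxE; apply: ler_sum => i _; rewrite mxE mul1r.
  by rewrite (bigD1 j) //= lerDl; apply: sumr_ge0 => ? _.
have lbG : lbound G mu by move=> t /goodgt /ltW.
have hlb : has_lbound G by exists mu.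
have hinf : has_inf G by split => //; exists t0.
set ts := inf G.
have mu_le : mu <= ts by apply: lb_le_inf => //; exists t0.
exists ts => //.
apply/negP => Zu0; have Zu : Z ts \in unitmx := Zu0.
pose K := invmx (Z ts).
pose b0 := \sum_i \sum_j `|K i j|.
have b00 : 0 <= b0 by apply: sumr_ge0 => i _; apply: sumr_ge0 => j _.
pose b := 1 + b0.
have bpos : 0 < b by rewrite /b; apply: ltr_wpDr.
have epos : 0 < (8 * b)^-1 by rewrite invr_gt0 mulr_gt0.
have [t Gt tlt] := inf_adherent epos hinf.
have tsle : ts <= t := ge_inf hlb Gt.
have [x [xp xZ]] := Gt.
have Ztu : Z t \in unitmx := Zunit (Zoff t) xp xZ.
pose w := (const_mx 1 : 'rV[R]_k) *m invmx (Z t).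
have wZ : w *m Z t = const_mx 1 by rewrite /w mulmxKV.
have w0 : forall i, 0 <= w 0 i.
  by apply: (Zcrit (Zoff t) xp xZ) => j; rewrite wZ mxE.
have wp : forall i, 0 < w 0 i.
  move=> i; rewrite lt_def w0 andbT; apply/negP => /eqP wi0.
  have := ZE w t i; rewrite wZ wi0 mulr0 sub0r mxE => H.
  by have := wM0 w w0 i; rewrite -[X in 0 <= X]opprK -H oppr_ge0 ler10.
pose h := t - ts.
have h0 : 0 <= h by rewrite subr_ge0.
have wK : w = (const_mx 1 - h *: w) *m K.
  have ZtsE : Z ts = Z t - h%:M.
    by apply/matrixP => i j; rewrite /Z /Zmx /h !mxE; case: (i == j); rewrite ?mulr1n ?mulr0n; ring.
  rewrite /K ZtsE; rewrite ZtsE in Zu.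
  by rewrite -wZ -mul_mx_scalar -mulmxBr mulmxK.
pose s := \sum_i w 0 i.
have ws : forall i, w 0 i <= s.
  by move=> i; rewrite /s (bigD1 i) //= lerDl; apply: sumr_ge0 => ? _.
have s0 : 0 <= s by apply: sumr_ge0 => i _.
have sb : s <= (1 + h * s) * b0.
  rewrite {1}/s.
  have -> : \sum_i w 0 i = \sum_j \sum_i (1 - h * w 0 i) * K i j.
    by apply: eq_bigr => j _; rewrite {1}wK mxE; apply: eq_bigr => i _; rewrite !mxE.
  rewrite /b0 exchange_big mulr_sumr /=; apply: ler_sum => i _.
  rewrite mulr_sumr; apply: ler_sum => j _.
  apply: le_trans (ler_norm _) _; rewrite normrM ler_wpM2r //.
  apply: le_trans (ler_normB _ _) _; rewrite normr1 lerD2l normrM.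
  by rewrite !ger0_norm // ler_wpM2l.
have hb : h * b * 8 < 1.
  have : h < (8 * b)^-1 by rewrite /h ltrBlDl.
  rewrite -div1r ltr_pdivlMr ?mulr_gt0 // => H.
  by have -> : h * b * 8 = h * (8 * b) by ring.
have sle : s <= 2 * b.
  have : h * s * b0 <= h * s * b.
    by apply: ler_wpM2l; [apply: mulr_ge0 | rewrite /b lerDr].
  move: h0 s0 b00 hb sb; rewrite /b; nra.
pose t' := t - (4 * b)^-1.
have Gt' : G t'.
  exists w; split => // j.
  rewrite ZE /t' mulrBl.
  have E := ZE w t j; rewrite wZ mxE in E.
  have : (4 * b)^-1 * w 0 j <= 2%:R^-1.
    rewrite mulrC ler_pdivrMr ?mulr_gt0 //.
    apply: le_trans (ws j) _; apply: le_trans sle _.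
    rewrite ler_pdivlMl ?ltr0Sn //; nra.
  move: E; set a := t * w 0 j; set c := (w *m M) 0 j; set d := (4 * b)^-1 * w 0 j.
  lra.
have := ge_inf hlb Gt'; rewrite /t'.
have : (8 * b)^-1 < (4 * b)^-1.
  rewrite ltf_pV2 ?posrE ?mulr_gt0 //; lra.
move: tlt; rewrite -/ts; lra.
Qed.


Lemma L1 k (Ah P : 'M[R]_k) (y : 'rV[R]_k) :
  Ah \in unitmx -> (forall i j, 0 <= invmx Ah i j) ->
  P \in unitmx -> (forall i j, 0 <= invmx P i j) ->
  (forall j, 0 <= y 0 j) -> y != 0 ->
  (forall j, y 0 j <= (y *m (1%:M - invmx P *m Ah)) 0 j) -> False.
Proof.
move=> Ahu Ah0 Pu P0 y0 yn0 yT.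
pose u := y *m invmx P.
have u0 : forall j, 0 <= u 0 j.
  by move=> j; rewrite mxE; apply: sumr_ge0 => i _; apply: mulr_ge0.
have uA : forall j, (u *m Ah) 0 j <= 0.
  move=> j; have := yT j; rewrite mulmxBr mulmx1 /u -mulmxA; set X := y *m _.
  rewrite mxE [(- X) 0 j]mxE.
  set a := y 0 j; set c := X 0 j; lra.
have uE : u = u *m Ah *m invmx Ah by rewrite mulmxK.
have u00 : u = 0.
  apply/matrixP => i j; rewrite ord1 [RHS]mxE; apply/eqP; rewrite eq_le u0 andbT.
  rewrite uE mxE; apply: sumr_le0 => l _; apply: mulr_le0_ge0 => //.
move/negP: yn0; apply; apply/eqP.
by rewrite -[y](mulmxKV Pu) -/u u00 mul0mx.
Qed.


Local Notation nc := (@ComplexField.Normc.normc R).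

Lemma nc_real (x : R) : nc (x%:C)%C = `|x|.
Proof. by rewrite /ComplexField.Normc.normc /= expr0n addr0 sqrtr_sqr. Qed.

Lemma nc_ge0 (z : R[i]) : 0 <= nc z.
Proof. by case: z => a b; rewrite /ComplexField.Normc.normc sqrtr_ge0. Qed.

Lemma nc_sum (I : finType) (F : I -> R[i]) : nc (\sum_i F i) <= \sum_i nc (F i).
Proof.
elim/big_rec2: _ => [|i y z _ Hyz]; first by rewrite ComplexField.Normc.normc0.
by apply: le_trans (le_normcD _ _) _; rewrite lerD2l.
Qed.

Lemma map_mxC k m (M : 'M[R]_(k, m)) :
  map_mx (fun x : R => (x%:C)%C) M = map_mx (real_complex R) M.
Proof. by []. Qed.

Lemma eig_split k (B C : 'M[R]_k) (l : R[i]) :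
  (forall i j, 0 <= B i j) -> (forall i j, 0 <= C i j) ->
  eigenvalue (map_mx (fun x : R => (x%:C)%C) (block_mx B C 1%:M 0)) l ->
  exists2 y : 'rV[R]_k, (forall j, 0 <= y 0 j) /\ y != 0 &
    forall j, nc l ^+ 2 * y 0 j <= \sum_i y 0 i * (nc l * B i j + C i j).
Proof.
move=> B0 C0 /eigenvalueP [v vW vn0].
rewrite map_mxC map_block_mx map_mx1 map_mx0 in vW.
rewrite -[v]hsubmxK mul_row_block mulmx1 mulmx0 addr0 scale_row_mx in vW.
case/eq_row_mx: vW => e1 e2.
set v1 := lsubmx v in e1 e2; set v2 := rsubmx v in e1 e2.
set Bm := map_mx _ B in e1; set Cm := map_mx _ C in e2.
have key : v1 *m (l *: Bm + Cm) = l ^+ 2 *: v1.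
  have e1' : v1 *m Bm = l *: v1 - v2.
    by move: e1 => <-; rewrite addrK.
  by rewrite mulmxDr -scalemxAr e1' e2 scalerBr addrNK scalerA expr2.
have v1n0 : v1 != 0.
  apply: contraNneq vn0 => v10; rewrite -[v]hsubmxK -/v1 -/v2.
  have v20 : v2 = 0 by move: e1; rewrite v10 mul0mx add0r scaler0.
  by rewrite v10 v20 row_mx0.
exists (\row_j nc (v1 0 j)); first split.
- by move=> j; rewrite mxE nc_ge0.
- apply: contraNneq v1n0 => y0; apply/eqP/matrixP => i j; rewrite ord1 [RHS]mxE.
  by apply: ComplexField.Normc.eq0_normc; have := congr1 (fun M : 'rV[R]_k => M 0 j) y0; rewrite !mxE.
move=> j.
have yE : forall i, (\row_j nc (v1 0 j)) 0 i = nc (v1 0 i) by move=> i; rewrite mxE.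
rewrite yE; under eq_bigr do rewrite yE.
have E : (v1 *m (l *: Bm + Cm)) 0 j = l ^+ 2 * v1 0 j by rewrite key mxE.
have -> : nc l ^+ 2 * nc (v1 0 j) = nc ((v1 *m (l *: Bm + Cm)) 0 j).
  by rewrite E ComplexField.Normc.normcM !expr2 ComplexField.Normc.normcM.
rewrite [(v1 *m _) 0 j]mxE; apply: le_trans (nc_sum _) _; apply: ler_sum => i _.
rewrite ComplexField.Normc.normcM ler_wpM2l ?nc_ge0 // !mxE.
apply: le_trans (le_normcD _ _) _.
by rewrite ComplexField.Normc.normcM !nc_real !ger0_norm.
Qed.

Lemma sing_eig k (M : 'M[R]_k) t : ~~ (t%:M - M \in unitmx) -> spectrum M (t%:C)%C.
Proof.
move=> H; rewrite /spectrum /= /eigenvalue /eigenspace kermx_eq0 row_free_unit.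
rewrite map_mxC -map_scalar_mx -map_mxB unitmxE det_map_mx unitfE fmorph_eq0 negbK.
have -> : \det (M - t%:M) = (-1) ^+ k * \det (t%:M - M) by rewrite -detZ scaleN1r opprB.
by move: H; rewrite unitmxE unitfE negbK => /eqP ->; rewrite mulr0.
Qed.

Lemma spec_roots k (M : 'M[R]_k) : exists r : seq R[i], forall l, spectrum M l <-> l \in r.
Proof.
have [r Hr] := closed_field_poly_normal (char_poly (map_mx (real_complex R) M)).
exists r => l; rewrite /spectrum /= map_mxC eigenvalue_root_char.
by rewrite Hr (monicP (char_poly_monic _)) scale1r root_prod_XsubC.
Qed.

Definition bmax (r : seq R[i]) := \big[Num.max/0]_(z <- r) nc z.

Lemma le_bmax (r : seq R[i]) l : l \in r -> nc l <= bmax r.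
Proof.
rewrite /bmax; elim: r => //= z r IH; rewrite inE big_cons => /orP[/eqP->|/IH H].
  by rewrite le_max lexx.
by rewrite le_max H orbT.
Qed.

Lemma bmax_ge0 (r : seq R[i]) : 0 <= bmax r.
Proof.
rewrite /bmax; elim: r => [|z r IH]; first by rewrite big_nil.
by rewrite big_cons le_max IH orbT.
Qed.

Lemma bmax_lt1 (r : seq R[i]) : (forall z, z \in r -> nc z < 1) -> bmax r < 1.
Proof.
rewrite /bmax; elim: r => [|z r IH] H; first by rewrite big_nil ltr01.
rewrite big_cons gt_max H ?mem_head //= IH // => z' z'r.
by apply: H; rewrite inE z'r orbT.
Qed.

Lemma spec_empty k (M : 'M[R]_k) : ~ (exists l, spectrum M l) ->
  spectral_radius M = 0.
Proof.
move=> Hn; rewrite /spectral_radius.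
have -> : [set nc l | l in spectrum M] = set0.
  by apply/seteqP; split=> x // [l' Hl' _]; case: Hn; exists l'.
exact: sup0.
Qed.

Lemma radius_ub k (M : 'M[R]_k) l : spectrum M l -> nc l <= spectral_radius M.
Proof.
move=> Hl; have [r Hr] := spec_roots M.
apply: ub_le_sup; last by exists l.
exists (bmax r) => x [l' Hl' <-]; apply: le_bmax; exact/Hr.
Qed.

Lemma radius_le k (M : 'M[R]_k) c : (forall l, spectrum M l -> nc l <= c) -> 0 <= c ->
  spectral_radius M <= c.
Proof.
move=> H c0; case: (pselect (exists l, spectrum M l)) => [[l Hl]|Hn].
  apply: ge_sup; first by exists (nc l); exists l.
  by move=> x [l' Hl' <-]; apply: H.
by rewrite spec_empty.
Qed.

Lemma radius_ge0 k (M : 'M[R]_k) : 0 <= spectral_radius M.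
Proof.
case: (pselect (exists l, spectrum M l)) => [[l Hl]|Hn].
  exact: le_trans (nc_ge0 l) (radius_ub Hl).
by rewrite spec_empty.
Qed.

Lemma radius_lt1 k (M : 'M[R]_k) : (forall l, spectrum M l -> nc l < 1) ->
  spectral_radius M < 1.
Proof.
move=> H; have [r Hr] := spec_roots M.
apply: le_lt_trans (radius_le (c := bmax r) _ (bmax_ge0 r)) _.
  by move=> l /Hr; apply: le_bmax.
by apply: bmax_lt1 => z /Hr; apply: H.
Qed.

Lemma mulmx_ge0 k m p (X : 'M[R]_(k, m)) (Y : 'M[R]_(m, p)) :
  (forall i j, 0 <= X i j) -> (forall i j, 0 <= Y i j) -> forall i j, 0 <= (X *m Y) i j.
Proof. by move=> HX HY i j; rewrite mxE; apply: sumr_ge0 => l _; apply: mulr_ge0. Qed.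

Lemma mulmx_le0_ge0 k m p (X : 'M[R]_(k, m)) (Y : 'M[R]_(m, p)) :
  (forall i j, X i j <= 0) -> (forall i j, 0 <= Y i j) -> forall i j, (X *m Y) i j <= 0.
Proof. by move=> HX HY i j; rewrite mxE; apply: sumr_le0 => l _; apply: mulr_le0_ge0. Qed.

Lemma mulmx_ge0_le0 k m p (X : 'M[R]_(k, m)) (Y : 'M[R]_(m, p)) :
  (forall i j, 0 <= X i j) -> (forall i j, Y i j <= 0) -> forall i j, (X *m Y) i j <= 0.
Proof. by move=> HX HY i j; rewrite mxE; apply: sumr_le0 => l _; apply: mulr_ge0_le0. Qed.

Lemma mulmx_le0_le0 k m p (X : 'M[R]_(k, m)) (Y : 'M[R]_(m, p)) :
  (forall i j, X i j <= 0) -> (forall i j, Y i j <= 0) -> forall i j, 0 <= (X *m Y) i j.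
Proof. by move=> HX HY i j; rewrite mxE; apply: sumr_ge0 => l _; apply: mulr_le0. Qed.

Lemma hat_facts k (A Pi Ri Si P3 R3 S3 : 'M[R]_k) :
  double_weak_regular_splitting A Pi Ri Si -> double_regular_splitting A P3 R3 S3 ->
  [/\ (forall i j, 0 <= (invmx P3 *m R3 - invmx P3 *m S3 *m invmx Pi *m Ri) i j),
      (forall i j, 0 <= (invmx P3 *m S3 *m invmx Pi *m Si) i j),
      invmx P3 *m Ahat A Pi S3 = 1%:M - (invmx P3 *m R3 - invmx P3 *m S3 *m invmx Pi *m Ri)
         - invmx P3 *m S3 *m invmx Pi *m Si
    & invmx P3 *m Rhat Pi Ri R3 S3 = invmx P3 *m R3 - invmx P3 *m S3 *m invmx Pi *m Ri].
Proof.
move=> [EAi Piu Pi0 PiR PiS] [EA3 P3u P30 R30 S30].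
have PS : forall i j, (invmx P3 *m S3) i j <= 0 by apply: mulmx_ge0_le0.
split.
- move=> i j; rewrite mxE [X in 0 <= _ + X]mxE subr_ge0.
  apply: (@le_trans _ _ 0); last by apply: mulmx_ge0.
  by rewrite -mulmxA; apply: mulmx_le0_ge0.
- by move=> i j; rewrite -mulmxA; apply: mulmx_le0_le0.
- set X := invmx P3 *m S3 *m invmx Pi.
  have h1 : invmx P3 *m A = 1%:M - invmx P3 *m R3 + invmx P3 *m S3.
    by rewrite {1}EA3 mulmxDr mulmxBr (mulVmx P3u).
  have h2 : X *m A = invmx P3 *m S3 - X *m Ri + X *m Si.
    rewrite EAi mulmxDr mulmxBr /X -[X in X - _ + _ = _]mulmxA.
    by rewrite (mulVmx Piu) mulmx1.
  rewrite /Ahat mulmxA mulmxBr mulmx1 mulmxA -/X mulmxBl h1 h2.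
  set a := invmx P3 *m R3; set b := invmx P3 *m S3; set c := X *m Ri; set d := X *m Si.
  by apply/matrixP => i j; rewrite !mxE; ring.
- by rewrite /Rhat mulmxBr !mulmxA.
Qed.

Lemma conv k (Ah P B C : 'M[R]_k) :
  Ah \in unitmx -> (forall i j, 0 <= invmx Ah i j) ->
  P \in unitmx -> (forall i j, 0 <= invmx P i j) ->
  (forall i j, 0 <= B i j) -> (forall i j, 0 <= C i j) ->
  invmx P *m Ah = 1%:M - B - C ->
  forall l, spectrum (block_mx B C 1%:M 0) l -> nc l < 1.
Proof.
move=> Ahu Ah0 Pu P0 B0 C0 EPA l Hl.
have [y [y0 yn0] Hy] := eig_split B0 C0 Hl.
rewrite ltNge; apply/negP => r1.
apply: (L1 Ahu Ah0 Pu P0 y0 yn0) => j.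
have -> : 1%:M - invmx P *m Ah = B + C.
  by rewrite EPA; apply/matrixP => i j'; rewrite !mxE; ring.
have H2 : nc l ^+ 2 * y 0 j <= nc l * (y *m (B + C)) 0 j.
  apply: le_trans (Hy j) _; rewrite mxE mulr_sumr; apply: ler_sum => i _; rewrite mxE.
  have := y0 i; have := B0 i j; have := C0 i j => c0 b0 yi0.
  have : 0 <= y 0 i * C i j * (nc l - 1) by rewrite !mulr_ge0 // subr_ge0.
  nra.
have yj := y0 j.
have : 0 <= y 0 j * (nc l - 1) by rewrite mulr_ge0 // subr_ge0.
move: H2; set X := (y *m (B + C)) 0 j; set r := nc l => H2 H3.
have r0 : 0 < r by apply: lt_le_trans r1.
have : r * y 0 j <= X.
  by rewrite -(ler_pM2l r0) mulrA -expr2.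
nra.
Qed.

Lemma split_all m n (P : 'I_(m + n) -> Prop) :
  (forall j, P (lshift n j)) -> (forall j, P (rshift m j)) -> forall j, P j.
Proof. by move=> Hl Hr j; rewrite -(splitK j); case: (split j) => j' /=; [apply: Hl|apply: Hr]. Qed.

End Helpers.

Local Notation nc := (@ComplexField.Normc.normc _).

Unset Implicit Arguments. Set Strict Implicit.

Theorem corollary3p12 (R : realType) (n : nat)
    (A P1 R1 S1 P2 R2 S2 P3 R3 S3 : 'M[R]_n) :
  monotone A ->
  double_weak_regular_splitting A P1 R1 S1 ->
  double_weak_regular_splitting A P2 R2 S2 ->
  double_regular_splitting A P3 R3 S3 ->
  ~ spectrum (S3 *m invmx P1) ((1 : R)%:C)%C ->
  ~ spectrum (S3 *m invmx P2) ((1 : R)%:C)%C ->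
  monotone (Ahat A P1 S3) ->
  monotone (Ahat A P2 S3) ->
  mx_ge (invmx P3 *m Ahat A P1 S3) (invmx P3 *m Ahat A P2 S3) ->
  mx_ge (invmx P3 *m Rhat P1 R1 R3 S3) (invmx P3 *m Rhat P2 R2 R3 S3) ->
  spectral_radius (W P1 R1 S1 P3 R3 S3) <= spectral_radius (W P2 R2 S2 P3 R3 S3)
  /\ spectral_radius (W P2 R2 S2 P3 R3 S3) < 1.
Proof.
move=> _ s1 s2 s3 _ _ [A1u A10] [A2u A20] HA HR.
have [P3u P30] : P3 \in unitmx /\ mx_ge0 (invmx P3) by case: s3.
have [B10 C10 A1E R1E] := hat_facts s1 s3.
have [B20 C20 A2E R2E] := hat_facts s2 s3.
rewrite /W.
set B1 := _ - _ *m R1 in B10 A1E R1E *.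
set C1 := _ *m S1 in C10 A1E *.
set B2 := _ - _ *m R2 in B20 A2E R2E *.
set C2 := _ *m S2 in C20 A2E *.
rewrite A1E A2E in HA; rewrite R1E R2E in HR.
have conv1 := conv A1u A10 P3u P30 B10 C10 A1E.
have conv2 := conv A2u A20 P3u P30 B20 C20 A2E.
split; last exact: radius_lt1.
apply: radius_le (radius_ge0 _) => l Hl.
have r1 := conv1 l Hl.
set r := nc l in r1 *.
have [r0|rn0] := eqVneq r 0; first by rewrite r0 radius_ge0.
have rpos : 0 < r by rewrite lt_def rn0 nc_ge0.
have [y [y0 yn0] Hy] := eig_split B10 C10 Hl.
rewrite -/r in Hy.
have Hy2 : forall j, r ^+ 2 * y 0 j <= \sum_i y 0 i * (r * B2 i j + C2 i j).
  move=> j; apply: le_trans (Hy j) _; apply: ler_sum => i _.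
  apply: ler_wpM2l; first exact: y0.
  have := HR i j; have := HA i j; rewrite !mxE => h1 h2.
  have : 0 <= (1 - r) * (B1 i j - B2 i j) by rewrite mulr_ge0 // subr_ge0 // ltW.
  nra.
pose Y := row_mx y (r^-1 *: (y *m C2)).
have W20 : forall i j, 0 <= block_mx B2 C2 1%:M 0 i j.
  apply: split_all => i; apply: split_all => j.
  - by rewrite block_mxEul.
  - by rewrite block_mxEur.
  - by rewrite block_mxEdl mxE ler0n.
  - by rewrite block_mxEdr mxE.
have Y0 : forall j, 0 <= Y 0 j.
  apply: split_all => j; first by rewrite row_mxEl.
  rewrite row_mxEr mxE; apply: mulr_ge0; first by rewrite invr_ge0 ltW.
  by apply: mulmx_ge0 => // i j'; rewrite ord1.
have Yn0 : Y != 0.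
  by apply: contraNneq yn0 => Y00; rewrite -(row_mxKl y (r^-1 *: (y *m C2))) -/Y Y00 linear0.
have YW : forall j, r * Y 0 j <= (Y *m block_mx B2 C2 1%:M 0) 0 j.
  rewrite /Y mul_row_block mulmx1 mulmx0 addr0.
  apply: split_all => j; rewrite ?row_mxEl ?row_mxEr.
    have S : \sum_i y 0 i * (r * B2 i j + C2 i j) = r * (y *m B2) 0 j + (y *m C2) 0 j.
      rewrite !mxE mulr_sumr -big_split. by apply: eq_bigr => i _ /=; ring.
    have := Hy2 j; rewrite S => H.
    have -> : (y *m B2 + r^-1 *: (y *m C2)) 0 j = (y *m B2) 0 j + r^-1 * (y *m C2) 0 j.
      by rewrite !mxE.
    rewrite -(ler_pM2l rpos) mulrDr [r * (r^-1 * _)]mulrA mulfV ?gt_eqF // mul1r mulrA -expr2.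
    by [].
  by rewrite mxE mulrA mulfV ?gt_eqF // mul1r.
have [t rt sing] := lowerPF W20 Y0 Yn0 YW.
apply: le_trans rt _; apply: le_trans (radius_ub (sing_eig sing)).
by rewrite nc_real ler_norm.
Qed.
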